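(* Let $G$ be a finite simple graph. Then the total number of (nonempty) cliques of $G$ satisfies \[ \sum_{t\ge 1}N(G,K_t)\;\le\;\sum_{v\in V(G)}\sum_{t=1}^{d(v)+1}\frac{\binom{d(v)+1}{t}}{d(v)+1}\;=\;\sum_{v\in V(G)}\frac{2^{d(v)+1}-1}{d(v)+1}. \]
   Context: $N(G,K_t)$ denotes the number of subgraphs of $G$ isomorphic to the complete graph $K_t$. $d(v)$ is the degree of $v$ in $G$. *)

(* Defs.v *)
From mathcomp Require Import all_boot all_order all_algebra.
Set Implicit Arguments. Unset Strict Implicit. Unset Printing Implicit Defensive.
Import GRing.Theory Num.Theory.

Definition simple_graph (T : finType) (e : rel T) : Prop :=
  symmetric e /\ irreflexive e.

Definition is_clique (T : finType) (e : rel T) (S : {set T}) : bool :=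
  [forall x in S, forall y in S, (x != y) ==> e x y].

(* N(G, K_t): number of subgraphs isomorphic to K_t, i.e. t-element cliques. *)
Definition NK (T : finType) (e : rel T) (t : nat) : nat :=
  #|[set S : {set T} | is_clique e S & #|S| == t]|.

Definition deg (T : finType) (e : rel T) (v : T) : nat := #|[set w | e v w]|.

(* Main.v *)
Require Import Defs.
From mathcomp Require Import all_boot all_order all_algebra.
From mathcomp Require Import ring.
Import GRing.Theory Num.Theory.
Local Open Scope ring_scope.

Lemma sum_eq1 (k m n : nat) :
  (\sum_(m <= t < n) (k == t) = ((m <= k) && (k < n)))%N.
Proof.
elim: n => [|n IH]; first by rewrite big_geq // ltn0 andbF.
case: (leqP m n) => hmn.
  rewrite big_nat_recr //= IH.
  case: (ltngtP k n) => h.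
  - by rewrite ltnS (ltnW h) addn0 !andbT.
  - by rewrite ltnS (leqNgt k n) h andbF.
  - by rewrite h hmn ltnSn andbF.
rewrite big_geq //.
case: (leqP m k) => h //=.
by rewrite ltnS leqNgt (leq_trans hmn h).
Qed.

Lemma binsum (n : nat) :
  \sum_(1 <= t < n.+1) ('C(n, t))%:R = (2 ^ n)%:R - 1 :> rat.
Proof.
have H : (2 ^ n = \sum_(i < n.+1) 'C(n, i))%N.
  rewrite -[2%N]/(1 + 1)%N expnDn; apply: eq_bigr => i _.
  by rewrite !exp1n !muln1.
rewrite -(big_mkord xpredT (fun i => 'C(n, i))) big_ltn // bin0 in H.
by rewrite -natr_sum H natrD; ring.
Qed.

Lemma binsh (d k : nat) :
  ('C(d, k))%:R / (k.+1)%:R = ('C(d.+1, k.+1))%:R / (d.+1)%:R :> rat.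
Proof.
apply/eqP; rewrite eqr_div ?pnatr_eq0 // -!natrM eqr_nat.
by apply/eqP; rewrite (mulnC 'C(d.+1, k.+1)) -mul_bin_diag mulnC.
Qed.

Lemma subsets_sum (T : finType) (B : {set T}) :
  \sum_(A : {set T} | A \subset B) 1 / (#|A|.+1)%:R
  = \sum_(k < #|B|.+1) ('C(#|B|, k))%:R / (k.+1)%:R :> rat.
Proof.
rewrite (partition_big (fun A : {set T} => (inord #|A| : 'I_(#|B|.+1))) predT) //=.
apply: eq_bigr => k _.
have -> : \sum_(A : {set T} | (A \subset B) && (inord #|A| == k))
            1 / (#|A|.+1)%:R
  = \sum_(A in [set A : {set T} | A \subset B & #|A| == k]) 1 / (k.+1)%:R :> rat.
  apply: eq_big => A.
    rewrite inE; case hs: (A \subset B) => //=.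
    have hA : (#|A| < #|B|.+1)%N by rewrite ltnS subset_leq_card.
    by rewrite -(inj_eq val_inj) /= inordK.
  move=> /andP [hs /eqP <-].
  by rewrite inordK // ltnS subset_leq_card.
by rewrite sumr_const cards_draws mul1r mulr_natl.
Qed.

Lemma clique_sub (T : finType) (e : rel T) (v : T) (A : {set T}) :
  is_clique e (v |: A) -> v \notin A -> A \subset [set w | e v w].
Proof.
move=> /forallP /(_ v) /implyP; rewrite setU11 => /(_ isT) /forallP H vA.
apply/subsetP => a aA; rewrite inE.
have := H a; rewrite in_setU1 aA orbT /= => /implyP; apply.
by apply/eqP => av; subst a; rewrite aA in vA.
Qed.

Lemma per_vertex (T : finType) (e : rel T) (v : T) :
  \sum_(S : {set T}) (if v \in S then (is_clique e S)%:R / (#|S|)%:R else 0)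
  <= \sum_(A : {set T} | A \subset [set w | e v w]) 1 / (#|A|.+1)%:R :> rat.
Proof.
rewrite -big_mkcond /=.
rewrite (reindex_onto (fun A => v |: A) (fun S => S :\ v)); last first.
  by move=> S vS; rewrite setD1K.
rewrite big_mkcond [X in _ <= X]big_mkcond /=.
apply: ler_sum => A _.
rewrite setU11 /=.
case hvA: (v \in A).
  have : (v |: A) :\ v != A by apply/eqP => h; move: hvA; rewrite -h setD11.
  by move/negbTE => ->; case: ifP => _ //; rewrite divr_ge0.
rewrite setU1K ?hvA // eqxx cardsU1 hvA add1n.
case hc: (is_clique e (v |: A)).
  by rewrite (clique_sub _ _ _ _ hc) ?hvA.
by rewrite mul0r; case: ifP => _ //; rewrite divr_ge0.
Qed.

Theorem mainTheorem2 (T : finType) (e : rel T) :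
  simple_graph e ->
  ((\sum_(1 <= t < #|T|.+1) (NK e t)%:R : rat)
     <= \sum_(v : T) \sum_(1 <= t < (deg e v).+2)
           ('C((deg e v).+1, t))%:R / ((deg e v).+1)%:R)
  /\
  (\sum_(v : T) \sum_(1 <= t < (deg e v).+2)
           ('C((deg e v).+1, t))%:R / ((deg e v).+1)%:R
   = \sum_(v : T) ((2 ^ (deg e v).+1)%:R - 1) / ((deg e v).+1)%:R :> rat).
Proof.
move=> _.
have inner v : \sum_(1 <= t < (deg e v).+2)
           ('C((deg e v).+1, t))%:R / ((deg e v).+1)%:R
    = \sum_(k < (deg e v).+1) ('C(deg e v, k))%:R / (k.+1)%:R :> rat.
  rewrite big_add1 /= big_mkord; apply: eq_bigr => k _.
  by rewrite binsh.
split; last first.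
  by apply: eq_bigr => v _; rewrite -mulr_suml binsum.
rewrite (eq_bigr _ (fun v _ => inner v)).
have -> : \sum_(1 <= t < #|T|.+1) (NK e t)%:R
  = \sum_(S : {set T}) ((is_clique e S) && (0 < #|S|)%N)%:R :> rat.
  have -> : \sum_(1 <= t < #|T|.+1) (NK e t)%:R
     = \sum_(1 <= t < #|T|.+1) \sum_(S : {set T})
          ((is_clique e S) * (#|S| == t))%:R :> rat.
    apply: eq_bigr => t _; rewrite /NK -sum1_card natr_sum.
    rewrite big_mkcond /=; apply: eq_bigr => S _.
    by rewrite inE; case: (is_clique e S); case: (#|S| == t).
  rewrite exchange_big /=; apply: eq_bigr => S _.
  rewrite -natr_sum -big_distrr /= sum_eq1 ltnS max_card andbT.
  by case: (is_clique e S); rewrite ?mul1n ?mul0n.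
have -> : \sum_(S : {set T}) ((is_clique e S) && (0 < #|S|)%N)%:R
  = \sum_(S : {set T}) \sum_(v : T)
      (if v \in S then (is_clique e S)%:R / (#|S|)%:R else 0) :> rat.
  apply: eq_bigr => S _.
  rewrite -big_mkcond /= sumr_const.
  case: (posnP #|S|) => h.
    by rewrite h andbF.
  rewrite andbT -[(_ / _) *+ _]mulr_natr -mulrA mulVf ?mulr1 //.
  by rewrite pnatr_eq0 -lt0n.
rewrite exchange_big /=; apply: ler_sum => v _.
apply: Order.le_trans (per_vertex _ e v) _.
rewrite subsets_sum; exact: Order.POrderTheory.lexx.
Qed.
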